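(* Let $n\ge 2$, $c_1,\dots,c_n>0$, and fix $i\in\{1,\dots,n\}$. Let $Q_i\in\mathbb{R}^{n\times n}$ be the symmetric matrix with $(Q_i)_{ii}=\frac{n-2}{c_i^2}$, $(Q_i)_{jj}=\frac{1}{c_j^2}$ and $(Q_i)_{ij}=(Q_i)_{ji}=-\frac{1}{c_ic_j}$ for $j\neq i$, and all other entries $0$. Then $Q_i$ has $n-1$ positive eigenvalues, no zero eigenvalue and exactly one negative eigenvalue, i.e. $\mathrm{inertia}(Q_i)=\{n-1,0,1\}$.
   Context: $\mathrm{inertia}(Q)=\{a,b,c\}$ means $Q$ has $a$ positive, $b$ zero and $c$ negative eigenvalues (counted with multiplicity). *)

(* Defs.v *)
From HB Require Import structures.
From mathcomp Require Import all_boot all_order all_algebra.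
Set Implicit Arguments. Unset Strict Implicit. Unset Printing Implicit Defensive.
Import Order.TTheory GRing.Theory Num.Theory.
Local Open Scope ring_scope.

(* inertia A p z m : the (real) eigenvalues of A, counted with algebraic
   multiplicity (i.e. as roots of the characteristic polynomial), are
   d_0,...,d_{n-1}, with p of them positive, z zero and m negative. *)
Definition inertia (R : rcfType) (n : nat) (A : 'M[R]_n) (p z m : nat) : Prop :=
  exists d : 'I_n -> R,
    char_poly A = \prod_(k < n) ('X - (d k)%:P) /\
    #|[pred k | 0 < d k]| = p /\
    #|[pred k | d k == 0]| = z /\
    #|[pred k | d k < 0]| = m.

Definition Qmat (R : rcfType) (n : nat) (c : 'I_n -> R) (i : 'I_n) : 'M[R]_n :=
  \matrix_(j, k)
    if j == k then
      (if j == i then (n - 2)%:R / (c i ^+ 2) else 1 / (c j ^+ 2))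
    else if (j == i) || (k == i) then - (1 / (c j * c k)) else 0.

(* Main.v *)
From HB Require Import structures.
From mathcomp Require Import all_boot all_order all_algebra.
From mathcomp Require Import complex.
Require Import Defs.
From mathcomp Require Import ring.
Set Implicit Arguments. Unset Strict Implicit. Unset Printing Implicit Defensive.
Import Order.TTheory GRing.Theory Num.Theory.
Local Open Scope ring_scope.
Local Open Scope sesquilinear_scope.
Lemma char_poly_sim (F : fieldType) n (P B : 'M[F]_n) : P \in unitmx ->
  char_poly (invmx P *m B *m P) = char_poly B.
Proof.
move=> Pu.
set Pp := map_mx polyC P.
have Ppu : Pp \in unitmx by rewrite map_unitmx.
have hX : ('X%:M : 'M[{poly F}]_n) = invmx Pp *m 'X%:M *m Pp.
  by rewrite scalar_mxC -mulmxA mulVmx // mulmx1.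
rewrite /char_poly.
have -> : char_poly_mx (invmx P *m B *m P) =
   invmx Pp *m char_poly_mx B *m Pp.
  rewrite /char_poly_mx mulmxBr mulmxBl -hX; congr (_ - _).
  by rewrite !map_mxM map_invmx.
rewrite !det_mulmx det_inv mulrC mulrA mulrV ?mul1r //.
Qed.
Lemma char_poly_diag (F : fieldType) n (D : 'rV[F]_n) :
  char_poly (diag_mx D) = \prod_(k < n) ('X - (D 0 k)%:P).
Proof.
rewrite char_poly_trig ?diag_mx_is_trig //.
by apply: eq_bigr => k _; rewrite mxE eqxx mulr1n.
Qed.

Section S.
Variable R : rcfType.
Local Notation C := (complex R).
Local Notation toC := (real_complex R).

Lemma toC_real (x : R) : toC x \is Num.real.
Proof. by apply/complex_realP; exists x. Qed.

Lemma conj_toC (x : R) : (toC x)^* = toC x.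
Proof. exact/CrealP/toC_real. Qed.

Lemma qf_expand n (u : 'rV[C]_n) (M : 'M[C]_n) :
  (u *m M *m u ^t*) 0 0 = \sum_j \sum_l u 0 j * M j l * (u 0 l)^*.
Proof.
rewrite !mxE exchange_big; apply: eq_bigr => l _.
rewrite !mxE big_distrl /=; apply: eq_bigr => j _.
by [].
Qed.

Lemma qf_diag n (w : 'rV[C]_n) (D : 'rV[C]_n) :
  (w *m diag_mx D *m w ^t*) 0 0 = \sum_k D 0 k * (w 0 k * (w 0 k)^*).
Proof.
rewrite mul_mx_diag mxE; apply: eq_bigr => k _.
by rewrite !mxE mulrA [_ * D 0 k]mulrC -mulrA.
Qed.
Section T.
Variables (n : nat) (c : 'I_n -> R) (hc : forall j, 0 < c j) (i : 'I_n).
Let A := map_mx toC (Qmat c i).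

Lemma A_entry j l : A j l = toC (Qmat c i j l).
Proof. by rewrite mxE. Qed.

Lemma Qsym j l : Qmat c i j l = Qmat c i l j.
Proof.
rewrite /Qmat !mxE eq_sym; case: eqP => [->|_] //.
by rewrite orbC [c l * _]mulrC.
Qed.

Lemma A_herm : A \is hermsymmx.
Proof.
apply/is_hermitianmxP; rewrite expr0 scale1r; apply/matrixP => j l.
by move: (Qsym j l); rewrite /Qmat !mxE conj_toC => ->.
Qed.

Lemma qf_pos (u : 'rV[C]_n) : u 0 i = 0 -> u != 0 -> 0 < (u *m A *m u ^t*) 0 0.
Proof.
move=> hu0 hu; rewrite qf_expand.
have inner j : \sum_l u 0 j * A j l * (u 0 l)^* = u 0 j * A j j * (u 0 j)^*.
  rewrite (bigD1 j) //= big1 ?addr0 // => l hl.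
  case: (eqVneq j i) => [->|hji]; first by rewrite hu0 !mul0r.
  case: (eqVneq l i) => [->|hli]; first by rewrite hu0 conjC0 mulr0.
  by rewrite A_entry /Qmat mxE eq_sym (negbTE hl) (negbTE hji) (negbTE hli) rmorph0 mulr0 mul0r.
under eq_bigr do rewrite inner.
have [j0 hj0] : exists j0, u 0 j0 != 0.
  apply/existsP; apply: contraR hu => /existsPn h; apply/eqP/matrixP => a b.
  by rewrite ord1 mxE; apply/eqP; move: (h b); rewrite negbK.
have hj0i : j0 != i by apply: contra_neq hj0 => ->; rewrite hu0.
have term_ge0 j : 0 <= u 0 j * A j j * (u 0 j)^*.
  case: (eqVneq j i) => [->|hji]; first by rewrite hu0 !mul0r.
  rewrite mulrC mulrA mulrC; apply: mulr_ge0; last first.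
    by rewrite mulrC mul_conjC_ge0.
  rewrite A_entry /Qmat mxE eqxx (negbTE hji) ler0c.
  by rewrite divr_ge0 // ?exprn_ge0 // ltW.
rewrite (bigD1 j0) //=; apply: ltr_wpDr; first by apply: sumr_ge0 => j _.
rewrite mulrC mulrA mulrC; apply: mulr_gt0; last first.
  by rewrite mulrC mul_conjC_gt0.
rewrite A_entry /Qmat mxE eqxx (negbTE hj0i) ltcR.
by rewrite divr_gt0 // ?exprn_gt0.
Qed.
Lemma Qc_sum : (2 <= n)%N -> \sum_j \sum_l c j * Qmat c i j l * c l = -1.
Proof.
move=> hn.
have cne j : c j != 0 by rewrite gt_eqF.
have rowj j : j != i -> \sum_l c j * Qmat c i j l * c l = 0.
  move=> hji; rewrite (bigD1 j) //= (bigD1 i) 1?eq_sym //= big1 ?addr0.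
    rewrite /Qmat !mxE eqxx (negbTE hji) eqxx orbT.
    by field; rewrite ?cne.
  move=> l /andP[hli hlj]; rewrite /Qmat mxE eq_sym (negbTE hlj) (negbTE hji) (negbTE hli).
  by rewrite mulr0 mul0r.
rewrite (bigD1 i) //= [X in _ + X]big1 ?addr0; last by move=> j; exact: rowj.
rewrite (bigD1 i) //=.
have -> : \sum_(l | l != i) c i * Qmat c i i l * c l = \sum_(l | l != i) (-1 : R).
  apply: eq_bigr => l hl; rewrite /Qmat mxE eq_sym (negbTE hl) eqxx.
  by rewrite /=; field; rewrite ?cne.
rewrite (sumr_const [pred l | l != i]) /Qmat mxE !eqxx.
have -> : #|[pred l | l != i]| = n.-1 by rewrite cardC1 card_ord.
case: n hn c hc i cne {rowj} => [|[|m]] // _ c' hc' i' cne /=.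
rewrite subn2 /= mulrSr mulNrn.
by field; rewrite ?cne.
Qed.
Lemma qf_c : (2 <= n)%N ->
  let uc := \row_j toC (c j) in (uc *m A *m uc ^t*) 0 0 = -1.
Proof.
move=> hn uc; rewrite qf_expand -[-1](rmorphN1 toC) -(Qc_sum hn) rmorph_sum.
apply: eq_bigr => j _; rewrite rmorph_sum; apply: eq_bigr => l _.
by rewrite !mxE conj_toC !rmorphM.
Qed.
End T.
End S.

Theorem mainTheorem5 (R : rcfType) (n : nat) (hn : (2 <= n)%N)
  (c : 'I_n -> R) (hc : forall j, 0 < c j) (i : 'I_n) :
  inertia (Qmat c i) n.-1 0 1.
Proof.
set A := map_mx (real_complex R) (Qmat c i).
have Aherm : A \is hermsymmx := A_herm c i.
have AE : A = invmx (spectralmx A) *m diag_mx (spectral_diag A) *m spectralmx A.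
  by apply/orthomx_spectralP/hermitian_normalmx.
set P := spectralmx A in AE *; set D := spectral_diag A in AE *.
have PU : P \is unitarymx := spectral_unitarymx A.
have /mxOverP Dr := hermitian_spectral_diag_real Aherm.
pose d k := complex.Re (D 0 k).
have Dd k : D 0 k = real_complex R (d k) by rewrite /d RRe_real // Dr.
have qf (u : 'rV_n) : (u *m A *m u ^t*) 0 0 =
    \sum_k D 0 k * ((u *m P ^t*) 0 k * ((u *m P ^t*) 0 k)^*).
  rewrite -(qf_diag (u *m P ^t*) D).
  have -> : (u *m P ^t*) ^t* = P *m u ^t*.
    by rewrite trmx_mul map_mxM trmxCK.
  by rewrite AE invmx_unitary // !mulmxA.
have [k0 hk0] : exists k0, d k0 < 0.
  apply/existsP; apply/contraT => /existsPn hall.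
  have := qf_c hc i hn; rewrite /= qf => hq.
  have : 0 <= -1 :> complex R.
    rewrite -hq; apply: sumr_ge0 => k _; rewrite Dd; apply: mulr_ge0.
      by rewrite ler0c leNgt; exact: hall.
    exact: mul_conjC_ge0.
  by rewrite oppr_ge0 ler10.
have F2 k1 k2 : d k1 <= 0 -> d k2 <= 0 -> k1 = k2.
  move=> h1 h2; apply/eqP; apply/contraT => hne.
  have key (w : 'rV_n) : w != 0 -> (forall k, w 0 k != 0 -> (k == k1) || (k == k2)) ->
      (w *m P) 0 i = 0 -> False.
    move=> wn0 wsup wi.
    have uw : w *m P *m P ^t* = w := mulmxtVK _ PU.
    have un0 : w *m P != 0 by apply: contra_neq wn0 => h; rewrite -uw h mul0mx.
    have := qf_pos hc wi un0; rewrite qf uw => hpos.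
    have : \sum_k D 0 k * (w 0 k * (w 0 k)^*) <= 0.
      apply: sumr_le0 => k _.
      case: (eqVneq (w 0 k) 0) => [->|hk]; first by rewrite mul0r mulr0.
      have /orP[] := wsup k hk => /eqP ->; rewrite Dd; apply: mulr_le0_ge0;
        (try exact: mul_conjC_ge0); by rewrite -(rmorph0 (real_complex R)) lecR.
    by move=> hle; have := lt_le_trans hpos hle; rewrite ltxx.
  exfalso; case: (eqVneq (P k1 i) 0) => hP.
    apply: (key (delta_mx 0 k1)).
    - apply/negP => /eqP/matrixP/(_ 0 k1); rewrite !mxE !eqxx /= => /eqP.
      by rewrite oner_eq0.
    - by move=> k; rewrite mxE eqxx /=; case: (k == k1) => //=; rewrite eqxx.
    - by rewrite -rowE mxE.
  apply: (key (P k2 i *: delta_mx 0 k1 - P k1 i *: delta_mx 0 k2)).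
  - apply/negP => /eqP/matrixP/(_ 0 k2); rewrite !mxE !eqxx eq_sym (negbTE hne) /=.
    rewrite mulr0 mulr1 sub0r => /eqP; rewrite oppr_eq0; exact/negP.
  - move=> k; rewrite !mxE eqxx /=; case: (eqVneq k k1) => //= _.
    case: (eqVneq k k2) => //= _; by rewrite !mulr0 subrr eqxx.
  - by rewrite mulmxBl -!scalemxAl -!rowE !mxE mulrC subrr.
have pos k : k != k0 -> 0 < d k.
  move=> hk; rewrite ltNge; apply/negP => hle.
  by move: hk; rewrite (F2 k k0 hle (ltW hk0)) eqxx.
exists d; split.
  apply: (@map_poly_inj _ _ (real_complex R)).
  rewrite map_char_poly -/A AE char_poly_sim ?spectral_unit // char_poly_diag.
  rewrite rmorph_prod; apply: eq_bigr => k _.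
  by rewrite rmorphB /= map_polyX map_polyC Dd.
split.
  rewrite (eq_card (B := predC1 k0)) ?cardC1 ?card_ord // => k; rewrite !inE.
  case: (eqVneq k k0) => [->|hk]; first by rewrite ltNge ltW.
  by rewrite pos.
split.
  apply: eq_card0 => k; rewrite !inE; case: (eqVneq k k0) => [->|hk].
    by rewrite lt_eqF.
  by rewrite gt_eqF ?pos.
apply: (@eq_card1 _ k0) => k; rewrite !inE; case: (eqVneq k k0) => [->|hk].
  by rewrite hk0.
by rewrite ltNge ltW ?pos.
Qed.
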